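(* Let $\mathcal H=(V,E)$ be a hypergraph with splitting functions and let $R\subseteq V$ with $\mathrm{vol}(R)>0$ and $\mathrm{vol}(\bar R)>0$. Let $\varepsilon\ge\varepsilon_0=\mathrm{vol}(R)/\mathrm{vol}(\bar R)$. Then for every $S\subseteq V$ with $\Omega_{R,\varepsilon}(S)>0$, we have $\mathrm{vol}(S)>0$, $\mathrm{vol}(\bar S)>0$, and $$\frac{\mathrm{vol}(\bar R)}{\mathrm{vol}(V)}\,\mathrm{ncut}(S)\le\mathrm{HLC}(S).$$
   Context: A hypergraph $\mathcal H=(V,E)$ has a finite node set $V$, and each hyperedge $e\in E$ is a subset of $V$. Each hyperedge $e$ carries a splitting function $w_e:2^e\to\mathbb R_{\ge0}$ satisfying $w_e(A)=w_e(e\setminus A)$ for all $A\subseteq e$ and $w_e(\emptyset)=w_e(e)=0$. For $S\subseteq V$, $\mathrm{cut}_{\mathcal H}(S)=\sum_{e\in E}w_e(e\cap S)$. The degree of $v$ is $d_v=\sum_{e\ni v}w_e(\{v\})$, and $\mathrm{vol}(S)=\sum_{v\in S}d_v$. Write $\bar S=V\setminus S$. Hypergraph normalized cut is $\mathrm{ncut}(S)=\frac{\mathrm{cut}_{\mathcal H}(S)}{\mathrm{vol}(S)}+\frac{\mathrm{cut}_{\mathcal H}(\bar S)}{\mathrm{vol}(\bar S)}$. Define $\Omega_{R,\varepsilon}(S)=\mathrm{vol}(S\cap R)-\varepsilon\,\mathrm{vol}(S\cap\bar R)$. Set $\mathrm{HLC}(S)=\mathrm{cut}_{\mathcal H}(S)/\Omega_{R,\varepsilon}(S)$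 if $\Omega_{R,\varepsilon}(S)>0$, and $\mathrm{HLC}(S)=\infty$ otherwise. *)

(* Defs.v *)
From HB Require Import structures.
From mathcomp Require Import all_boot all_order all_algebra.
Set Implicit Arguments. Unset Strict Implicit. Unset Printing Implicit Defensive.
Import Order.TTheory GRing.Theory Num.Theory.
Local Open Scope ring_scope.

Section Hyper.
Variables (R : realFieldType) (V : finType) (I : finType).
(* hyperedges indexed by I; e i is the node set of hyperedge i,
   w i is its splitting function (on subsets of V; only arguments A \subset e i matter) *)
Variables (e : I -> {set V}) (w : I -> {set V} -> R).

Definition splitting_functions : Prop :=
  forall i : I,
    (forall A : {set V}, A \subset e i -> 0 <= w i A) /\
    (forall A : {set V}, A \subset e i -> w i A = w i (e i :\: A)) /\
    w i set0 = 0 /\ w i (e i) = 0.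

Definition hcut (S : {set V}) : R := \sum_(i : I) w i (e i :&: S).
Definition deg (v : V) : R := \sum_(i : I | v \in e i) w i [set v].
Definition vol (S : {set V}) : R := \sum_(v in S) deg v.
Definition ncut (S : {set V}) : R := hcut S / vol S + hcut (~: S) / vol (~: S).
Definition Omega (Rs : {set V}) (eps : R) (S : {set V}) : R :=
  vol (S :&: Rs) - eps * vol (S :&: ~: Rs).
(* HLC with values in R ∪ {∞}: None stands for ∞ *)
Definition HLC (Rs : {set V}) (eps : R) (S : {set V}) : option R :=
  if 0 < Omega Rs eps S then Some (hcut S / Omega Rs eps S) else None.
End Hyper.

Definition le_ext (R : realFieldType) (x : R) (y : option R) : Prop :=
  match y with Some y' => x <= y' | None => True end.

(* Main.v *)
Require Import Defs.
From HB Require Import structures.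
From mathcomp Require Import all_boot all_order all_algebra.
From mathcomp Require Import ring lra.
Import Order.TTheory GRing.Theory Num.Theory.
Local Open Scope ring_scope.

Theorem mainTheorem8 (R : realFieldType) (V I : finType)
  (e : I -> {set V}) (w : I -> {set V} -> R)
  (Hw : splitting_functions e w)
  (Rs : {set V})
  (HR : 0 < vol e w Rs) (HRc : 0 < vol e w (~: Rs))
  (eps : R) (Heps : vol e w Rs / vol e w (~: Rs) <= eps) :
  forall S : {set V}, 0 < Omega e w Rs eps S ->
    0 < vol e w S /\ 0 < vol e w (~: S) /\
    le_ext (vol e w (~: Rs) / vol e w [set: V] * ncut e w S) (HLC e w Rs eps S).
Proof.
move=> S HO.
have split A B : vol e w A = vol e w (A :&: B) + vol e w (A :&: ~: B).
  by rewrite /vol (big_setID B) setDE.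
have volge0 A : 0 <= vol e w A.
  apply: sumr_ge0 => v _; apply: sumr_ge0 => i vi.
  by have [H _] := Hw i; apply: H; rewrite sub1set.
have hge0 : 0 <= hcut e w S.
  by apply: sumr_ge0 => i _; have [H _] := Hw i; apply: H; apply: subsetIl.
have hC : hcut e w (~: S) = hcut e w S.
  apply: eq_bigr => i _; have [_ [H _]] := Hw i.
  rewrite [RHS]H ?subsetIl //; congr (w i _).
  by apply/setP => x; rewrite !inE; case: (x \in e i); case: (x \in S).
have vT : vol e w [set: V] = vol e w S + vol e w (~: S).
  by rewrite (split _ S) !setTI.
have eR := split Rs S; have eRc := split (~: Rs) S.
have eS := split S Rs; have eSc := split (~: S) Rs.
rewrite (setIC Rs S) (setIC Rs (~: S)) in eR.
rewrite (setIC (~: Rs) S) (setIC (~: Rs) (~: S)) in eRc.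
move: HO Heps HR HRc; rewrite /HLC /Omega /ncut hC vT eR eRc eS eSc.
have := volge0 (S :&: Rs); have := volge0 (S :&: ~: Rs).
have := volge0 (~: S :&: Rs); have := volge0 (~: S :&: ~: Rs).
set a := vol e w (S :&: Rs); set b := vol e w (S :&: ~: Rs).
set c := vol e w (~: S :&: Rs); set d := vol e w (~: S :&: ~: Rs).
set h := hcut e w S.
move=> d0 c0 b0 a0 HO Heps HR HRc.
rewrite ler_pdivrMr // in Heps.
have a1 : 0 < a by nra.
have d1 : 0 < d by nra.
split; first lra. split; first lra.
rewrite HO /=.
have -> : (b + d) / (a + b + (c + d)) * (h / (a + b) + h / (c + d))
  = h * ((b + d) / ((a + b) * (c + d))).
  have p1 : c + d != 0 by rewrite lt0r_neq0 //; lra.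
  have p2 : a + b != 0 by rewrite lt0r_neq0 //; lra.
  have p3 : a + b + (c + d) != 0 by rewrite lt0r_neq0 //; lra.
  by field; rewrite p1 p2 p3.
apply: ler_wpM2l => //.
rewrite ler_pdivrMr; last by apply: mulr_gt0; lra.
rewrite mulrC ler_pdivlMr; last lra.
nra.
Qed.
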